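(* Let $0<q<1$, let $I=[0,b)$ with $0<b\le\infty$, and let $R,S,T:I\to\mathbb{R}$ be continuous functions such that $1-(1-q)tR(t)>0$ and $1-(1-q)tT(t)>0$ for all $t\in I$. For $x\in I$ put $$\Lambda(x)=\mathbb{1}-(1-q)x\begin{pmatrix}R(x)&S(x)\\0&T(x)\end{pmatrix},\qquad \Lambda(x;q)_n=\Lambda(q^{n-1}x)\cdots\Lambda(qx)\Lambda(x).$$ Then for every $x\in I$ the limit $\Lambda(x;q)_\infty=\lim_{n\to\infty}\Lambda(x;q)_n$ exists and $$\Lambda(x;q)_\infty=\begin{pmatrix}\exp\Big(\frac{1}{1-q}\int_0^x\frac{\ln(1-(1-q)tR(t))}{t}\,d_qt\Big) & B(x)\\[1mm] 0 & \exp\Big(\frac{1}{1-q}\int_0^x\frac{\ln(1-(1-q)tT(t))}{t}\,d_qt\Big)\end{pmatrix},$$ where $$B(x)=-\exp\Big(\frac{1}{1-q}\int_0^x\frac{\ln(1-(1-q)tT(t))}{t}\,d_qt\Big)\int_0^x\frac{S(t)}{1-(1-q)tR(t)}\exp\Big(\frac{1}{1-q}\int_0^t\frac1s\ln\frac{1-(1-q)sR(s)}{1-(1-q)sT(s)}\,d_qs\Big)d_qt.$$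
   Context: The Jackson $q$-integral is $\int_0^x f(t)\,d_qt=\sum_{n=0}^\infty(1-q)q^nx\,f(q^nx)$. In the integrands $\ln(\cdot)/t$, the value at $t=0$ never occurs since the $q$-integral only samples $t=q^nx$; for $x=0$ all $q$-integrals are $0$. $\mathbb{1}$ denotes the $2\times2$ identity matrix. *)

(* Defs.v *)
From HB Require Import structures.
From mathcomp Require Import all_boot all_order all_algebra.
From mathcomp Require Import all_classical all_reals all_analysis.
Set Implicit Arguments. Unset Strict Implicit. Unset Printing Implicit Defensive.
Import Order.TTheory GRing.Theory Num.Theory.
Import numFieldNormedType.Exports.
Local Open Scope ring_scope.
Local Open Scope classical_set_scope.

Definition jackson {R : realType} (q : R) (f : R -> R) (x : R) : R :=
  limn (fun N : nat => \sum_(0 <= n < N) ((1 - q) * q ^+ n * x * f (q ^+ n * x))).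

Definition mx2 {R : ringType} (a b c d : R) : 'M[R]_2 :=
  \matrix_(i < 2, j < 2)
    if (i == 0 :> nat) then (if (j == 0 :> nat) then a else b)
    else (if (j == 0 :> nat) then c else d).

Definition Lam {R : realType} (q : R) (Rf Sf Tf : R -> R) (x : R) : 'M[R]_2 :=
  1%:M - ((1 - q) * x) *: mx2 (Rf x) (Sf x) 0 (Tf x).

Fixpoint Lamn {R : realType} (q : R) (Rf Sf Tf : R -> R) (x : R) (n : nat)
  : 'M[R]_2 :=
  match n with
  | 0 => 1%:M
  | n'.+1 => Lam q Rf Sf Tf (q ^+ n' * x) * Lamn q Rf Sf Tf x n'
  end.

(* Main.v *)
From HB Require Import structures.
From mathcomp Require Import all_boot all_order all_algebra.
From mathcomp Require Import all_classical all_reals all_analysis.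
From mathcomp Require Import ring lra.
Require Import Defs.
Import Order.TTheory GRing.Theory Num.Theory.
Import numFieldNormedType.Exports.
Local Open Scope ring_scope.
Local Open Scope classical_set_scope.
Set Implicit Arguments. Unset Strict Implicit.

Lemma mx2_mul (R : comRingType) (a b c d a' b' c' d' : R) :
  (mx2 a b c d * mx2 a' b' c' d' : 'M[R]_2) =
  mx2 (a*a' + b*c') (a*b' + b*d') (c*a'+d*c') (c*b' + d*d').
Proof.
apply/matrixP => i j; rewrite !mxE !big_ord_recr big_ord0 /= !mxE add0r.
by case: i => [[|[|i]] hi]; case: j => [[|[|j]] hj].
Qed.

Lemma Lam_eq (R : realType) (q : R) Rf Sf Tf y :
  Lam q Rf Sf Tf y = mx2 (1 - (1-q)*y*Rf y) (-((1-q)*y*Sf y)) 0 (1 - (1-q)*y*Tf y).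
Proof.
apply/matrixP => i j; rewrite /Lam !mxE.
case: i => [[|[|i]] hi]; case: j => [[|[|j]] hj] //=; rewrite ?mulr1n ?mulr0n ?mulrA; ring.
Qed.

Lemma cvg_mx2 (R : realType) (a b c d : nat -> R) (a0 b0 c0 d0 : R) :
  a n @[n --> \oo] --> a0 -> b n @[n --> \oo] --> b0 ->
  c n @[n --> \oo] --> c0 -> d n @[n --> \oo] --> d0 ->
  mx2 (a n) (b n) (c n) (d n) @[n --> \oo] --> mx2 a0 b0 c0 d0.
Proof.
move=> /cvg_entourageP ha /cvg_entourageP hb /cvg_entourageP hc /cvg_entourageP hd.
apply/cvg_mx_entourageP => A eA.
have := ha _ eA; have := hb _ eA; have := hc _ eA; have := hd _ eA.
move=> Hd Hc Hb Ha.
have H : \forall n \near \oo, [/\ A (a0, a n), A (b0, b n), A (c0, c n) & A (d0, d n)].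
  by near=> n; split; near: n.
apply: filterS H => n [h1 h2 h3 h4] i j /=; rewrite !mxE inE.
by case: ifP => _; case: ifP => _.
Unshelve. all: end_near.
Qed.
Section Gen.
Variable R : realType.
Variable q : R.
Hypothesis hq0 : 0 < q.
Hypothesis hq1 : q < 1.

Lemma geo_cvg (u : nat -> R) M : (forall k, `|u k| <= M * q ^+ k) ->
  cvgn (series u).
Proof.
move=> hu; apply: normed_cvg.
apply: (@series_le_cvg _ _ (geometric M q)).
- by move=> n; exact: normr_ge0.
- by move=> n; exact: le_trans (normr_ge0 _) (hu n).
- by move=> n; exact: hu.
- by apply: is_cvg_geometric_series; rewrite ger0_norm ?ltW.
Qed.

Lemma geo_cvg0 (u : nat -> R) M : (forall k, `|u k| <= M * q ^+ k) ->
  u @ \oo --> 0.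
Proof. by move=> /geo_cvg/cvg_series_cvg_0. Qed.

Lemma bnd_seq (u : nat -> R) (l : R) : u n @[n --> \oo] --> l -> exists M, forall k, `|u k| <= M.
Proof.
move=> ul; have : cvgn (u : nat -> R^o) by apply: cvgP ul.
move=> /cvg_seq_bounded [M [Mreal]]/(_ (`|M| + 1)).
rewrite (le_lt_trans (ler_norm _)) ?ltrDl// => /(_ erefl) aM.
by exists (`|M| + 1) => k; apply: aM.
Qed.

Lemma ln_bound (y : R) : 0 < y -> `|ln y| <= `|y - 1| * (1 + y^-1).
Proof.
move=> y0.
have h1 : ln y <= y - 1.
  have := expR_ge1Dx (ln y); rewrite lnK ?posrE //; lra.
have h2 : - ln y <= y^-1 - 1.
  have := expR_ge1Dx (ln y^-1); rewrite lnK ?posrE ?invr_gt0 // lnV ?posrE //; lra.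
have yi : 0 < y^-1 by rewrite invr_gt0.
have e : y^-1 - 1 = - (y - 1) * y^-1 by field; rewrite gt_eqF.
rewrite e in h2.
case: (lerP 0 (ln y)) => hl.
  rewrite (ger0_norm hl) mulrDr mulr1.
  apply: le_trans h1 _; apply: le_trans (ler_norm _) _.
  by rewrite lerDl mulr_ge0 ?normr_ge0 ?ltW.
rewrite (ltr0_norm hl) mulrDr mulr1.
apply: le_trans h2 _.
have : - (y - 1) * y^-1 <= `|y - 1| * y^-1.
  apply: ler_wpM2r; first exact: ltW.
  by rewrite ler_normr lexx orbT.
by move=> h; apply: le_trans h _; rewrite lerDr normr_ge0.
Qed.


Section Prod.
Variable a : nat -> R.
Variable M : R.
Hypothesis ha0 : forall k, 0 < a k.
Hypothesis ha : forall k, `|1 - a k| <= M * q ^+ k.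

Lemma a_cvg1 : a n @[n --> \oo] --> (1:R).
Proof.
have h0 := @geo_cvg0 _ _ ha.
have e : forall k, a k = 1 - (1 - a k) by move=> k; ring.
rewrite (eq_cvg _ _ e).
have := cvgB (cvg_cst (1:R)) h0; rewrite subr0; exact.
Qed.

Lemma lna_cvg : cvgn (series (fun k => ln (a k))).
Proof.
have hi : (fun k => (a k)^-1) n @[n --> \oo] --> (1:R)^-1.
  by apply: cvgV; [exact: oner_neq0 | exact: a_cvg1].
have [C hC] := @bnd_seq _ _ hi.
apply: (@geo_cvg _ (M * (1 + C))) => k.
apply: le_trans (@ln_bound _ (ha0 k)) _.
rewrite distrC.
have h1 : 0 <= 1 + (a k)^-1 by rewrite addr_ge0 // ltW // invr_gt0.
have h2 : 1 + (a k)^-1 <= 1 + C.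
  by rewrite lerD2l; apply: le_trans (ler_norm _) (hC k).
apply: le_trans (ler_pM (normr_ge0 _) h1 (ha k) h2) _.
by rewrite mulrAC.
Qed.

Lemma prod_eq n : \prod_(k < n) a k = expR (series (fun k => ln (a k)) n).
Proof.
rewrite /series /= expR_sum big_mkord; apply: eq_bigr => k _.
by rewrite lnK // posrE.
Qed.

Lemma prod_cvg : (\prod_(k < n) a k) @[n --> \oo] -->
  expR (limn (series (fun k => ln (a k)))).
Proof.
rewrite (eq_cvg _ _ prod_eq).
apply: (cvg_comp _ _ lna_cvg).
exact: continuous_expR.
Qed.

End Prod.
End Gen.

Lemma limE (R : realType) (u : nat -> R) (l : R) :
  u n @[n --> \oo] --> l -> limn u = l.
Proof. by move=> h; apply: (cvg_lim (@Rhausdorff R)). Qed.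

Lemma cvg_uniq (R : realType) (u : nat -> R) (l1 l2 : R) :
  u n @[n --> \oo] --> l1 -> u n @[n --> \oo] --> l2 -> l1 = l2.
Proof. by move=> h1 h2; rewrite -(limE h1) -(limE h2). Qed.

Lemma seq_cont (R : realType) (A : set R) (f : R -> R) (u : nat -> R) (l : R) :
  (forall k, A (u k)) -> A l -> u n @[n --> \oo] --> l ->
  {within A, continuous f} -> f (u n) @[n --> \oo] --> f l.
Proof.
move=> Au Al ul /subspace_continuousP/(_ l Al) fc.
have fc2 : (f x @[x --> within A (nbhs l)] --> f l) := fc.
have h : (f (u n) @[n --> \oo] `=>` f x @[x --> within A (nbhs l)]).
  move=> P /= hP.
  have hP2 : within A (nbhs l) (f @^-1` P) := hP.
  rewrite /within in hP2.
  have hP3 : nbhs l (fun x => A x -> P (f x)) := hP2.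
  move: (ul _ hP3) => h1; exact: (filterS (fun n hn => hn (Au n)) h1).
exact: (cvg_trans h fc2).
Qed.

Lemma term_eq (R : realType) (c z w : R) : (z = 0 -> w = 0) ->
  c * z * (w / z) = c * w /\ c * z * (z^-1 * w) = c * w.
Proof.
have [->|z0] := eqVneq z 0.
  by move=> /(_ erefl) ->; rewrite !(mulr0, mul0r).
by move=> _; split; field.
Qed.

Lemma bnd_term (R : realType) (q x : R) (f : R -> R) (M : R) :
  0 < q -> q < 1 -> 0 <= x -> (forall k, `|f (q ^+ k * x)| <= M) ->
  forall k, `|(1 - q) * (q ^+ k * x) * f (q ^+ k * x)| <= ((1 - q) * x * M) * q ^+ k.
Proof.
move=> q0 q1 x0 hf k.
have c0 : 0 <= (1 - q) * (q ^+ k * x).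
  apply: mulr_ge0; first by rewrite subr_ge0 ltW.
  by apply: mulr_ge0 => //; apply: exprn_ge0; exact: ltW.
rewrite normrM (ger0_norm c0).
apply: le_trans (ler_wpM2l c0 (hf k)) _.
by rewrite le_eqVlt; apply/orP; left; apply/eqP; ring.
Qed.

Lemma shift_bnd (R : realType) (q : R) (u : nat -> R) (M : R) : 0 < q -> q < 1 ->
  (forall k, `|u k| <= M * q ^+ k) -> forall k0 m, `|u (m + k0)%N| <= M * q ^+ m.
Proof.
move=> q0 q1 hu k0 m.
have M0 : 0 <= M by have := hu 0%N; rewrite expr0 mulr1; apply: le_trans.
apply: le_trans (hu _) _; rewrite exprD mulrA.
apply: ler_piMr; first by apply: mulr_ge0 => //; apply: exprn_ge0; exact: ltW.
by apply: exprn_ile1; [exact: ltW | exact: ltW].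
Qed.

Lemma prod_split (R : comNzRingType) (a : nat -> R) n k0 :
  \prod_(k < n + k0) a k = \prod_(k < k0) a k * \prod_(m < n) a (m + k0)%N.
Proof.
rewrite addnC big_split_ord /=; congr (_ * _); apply: eq_bigr => i _ //.
by rewrite addnC.
Qed.

Unset Implicit Arguments.

Theorem proposition1 (R : realType) (q : R) (b : \bar R)
  (Rf Sf Tf : R -> R) :
  0 < q -> q < 1 -> (0 < b)%E ->
  {within [set t : R | 0 <= t /\ (t%:E < b)%E], continuous Rf} ->
  {within [set t : R | 0 <= t /\ (t%:E < b)%E], continuous Sf} ->
  {within [set t : R | 0 <= t /\ (t%:E < b)%E], continuous Tf} ->
  (forall t : R, 0 <= t -> (t%:E < b)%E -> 0 < 1 - (1 - q) * t * Rf t) ->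
  (forall t : R, 0 <= t -> (t%:E < b)%E -> 0 < 1 - (1 - q) * t * Tf t) ->
  forall x : R, 0 <= x -> (x%:E < b)%E ->
  let ER := fun y => expR ((1 - q)^-1 *
              jackson q (fun t => ln (1 - (1 - q) * t * Rf t) / t) y) in
  let ET := fun y => expR ((1 - q)^-1 *
              jackson q (fun t => ln (1 - (1 - q) * t * Tf t) / t) y) in
  let B := - ET x * jackson q (fun t =>
              Sf t / (1 - (1 - q) * t * Rf t) *
              expR ((1 - q)^-1 * jackson q (fun s =>
                 s^-1 * ln ((1 - (1 - q) * s * Rf s) /
                            (1 - (1 - q) * s * Tf s))) t)) x in
  Lamn q Rf Sf Tf x n @[n --> \oo] --> mx2 (ER x) B 0 (ET x).
Proof.
move=> hq0 hq1 hb cR cS cT pR pT x hx0 hxb ER ET B.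
have c0 : 0 < 1 - q by rewrite subr_gt0.
have cn0 : 1 - q != 0 by rewrite gt_eqF.
have Ak : forall k, [set t : R | 0 <= t /\ (t%:E < b)%E] (q ^+ k * x).
  move=> k; split; first by apply: mulr_ge0 => //; apply: exprn_ge0; exact: ltW.
  apply: le_lt_trans hxb; rewrite lee_fin.
  by apply: ler_piMl => //; apply: exprn_ile1; exact: ltW.
have A0 : [set t : R | 0 <= t /\ (t%:E < b)%E] 0 by split.
have ux : (q ^+ n * x) @[n --> \oo] --> (0:R).
  have := @cvg_geometric R x q; rewrite ger0_norm ?ltW // => /(_ hq1).
  by rewrite (eq_cvg _ _ (fun n => mulrC x (q ^+ n))).
have [MR hMR] := bnd_seq (seq_cont Ak A0 ux cR).
have [MS hMS] := bnd_seq (seq_cont Ak A0 ux cS).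
have [MT hMT] := bnd_seq (seq_cont Ak A0 ux cT).
pose a k := 1 - (1 - q) * (q ^+ k * x) * Rf (q ^+ k * x).
pose d k := 1 - (1 - q) * (q ^+ k * x) * Tf (q ^+ k * x).
pose s k := - ((1 - q) * (q ^+ k * x) * Sf (q ^+ k * x)).
have a0 : forall k, 0 < a k := fun k => pR _ (Ak k).1 (Ak k).2.
have d0 : forall k, 0 < d k := fun k => pT _ (Ak k).1 (Ak k).2.
have ab : forall k, `|1 - a k| <= ((1 - q) * x * MR) * q ^+ k.
  move=> k; have -> : 1 - a k = (1 - q) * (q ^+ k * x) * Rf (q ^+ k * x) by rewrite /a; ring.
  exact: bnd_term.
have db : forall k, `|1 - d k| <= ((1 - q) * x * MT) * q ^+ k.
  move=> k; have -> : 1 - d k = (1 - q) * (q ^+ k * x) * Tf (q ^+ k * x) by rewrite /d; ring.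
  exact: bnd_term.
have sb : forall k, `|s k| <= ((1 - q) * x * MS) * q ^+ k.
  by move=> k; rewrite /s normrN; exact: bnd_term.
pose PA n := \prod_(k < n) a k.
pose PD n := \prod_(k < n) d k.
pose La k0 := limn (series (fun m => ln (a (m + k0)%N))).
pose Ld k0 := limn (series (fun m => ln (d (m + k0)%N))).
have ab' : forall k0 m, `|1 - a (m + k0)%N| <= ((1 - q) * x * MR) * q ^+ m.
  by move=> k0; apply: (shift_bnd (u := fun k => 1 - a k)).
have db' : forall k0 m, `|1 - d (m + k0)%N| <= ((1 - q) * x * MT) * q ^+ m.
  by move=> k0; apply: (shift_bnd (u := fun k => 1 - d k)).
pose EA := expR (limn (series (fun k => ln (a k)))).
pose ED := expR (limn (series (fun k => ln (d k)))).
have PAc : PA n @[n --> \oo] --> EA := prod_cvg hq0 hq1 a0 ab.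
have PDc : PD n @[n --> \oo] --> ED := prod_cvg hq0 hq1 d0 db.
have PA0 : forall n, 0 < PA n by move=> n; apply: prodr_gt0 => k _.
have PD0 : forall n, 0 < PD n by move=> n; apply: prodr_gt0 => k _.
have keyA : forall k0, PA k0 * expR (La k0) = EA.
  move=> k0.
  have h1 : PA (n + k0)%N @[n --> \oo] --> EA by rewrite (@cvg_shiftn k0 _ PA).
  have h2 : PA (n + k0)%N @[n --> \oo] --> PA k0 * expR (La k0).
    rewrite (eq_cvg _ _ (fun n => prod_split a n k0)).
    exact: cvgM (cvg_cst _) (prod_cvg hq0 hq1 (fun m => a0 (m + k0)%N) (ab' k0)).
  exact: cvg_uniq h2 h1.
have keyD : forall k0, PD k0 * expR (Ld k0) = ED.
  move=> k0.
  have h1 : PD (n + k0)%N @[n --> \oo] --> ED by rewrite (@cvg_shiftn k0 _ PD).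
  have h2 : PD (n + k0)%N @[n --> \oo] --> PD k0 * expR (Ld k0).
    rewrite (eq_cvg _ _ (fun n => prod_split d n k0)).
    exact: cvgM (cvg_cst _) (prod_cvg hq0 hq1 (fun m => d0 (m + k0)%N) (db' k0)).
  exact: cvg_uniq h2 h1.
have hER : ER x = EA.
  rewrite /ER /EA; congr expR.
  suff -> : jackson q (fun t => ln (1 - (1 - q) * t * Rf t) / t) x =
      (1 - q) * limn (series (fun k => ln (a k))).
    by rewrite mulrA mulVf // mul1r.
  rewrite /jackson; apply: limE.
  have e : forall N, \sum_(0 <= n < N) ((1 - q) * q ^+ n * x *
      (ln (1 - (1 - q) * (q ^+ n * x) * Rf (q ^+ n * x)) / (q ^+ n * x))) =
      (1 - q) * series (fun k => ln (a k)) N.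
    move=> N; rewrite /series /= mulr_sumr; apply: eq_bigr => n _.
    rewrite -[(1 - q) * q ^+ n * x]mulrA; apply: (term_eq _ _).1.
    by move=> ->; rewrite mulr0 mul0r subr0 ln1.
  rewrite (eq_cvg _ _ e).
  exact: cvgM (cvg_cst _) (lna_cvg hq0 hq1 a0 ab).
have hET : ET x = ED.
  rewrite /ET /ED; congr expR.
  suff -> : jackson q (fun t => ln (1 - (1 - q) * t * Tf t) / t) x =
      (1 - q) * limn (series (fun k => ln (d k))).
    by rewrite mulrA mulVf // mul1r.
  rewrite /jackson; apply: limE.
  have e : forall N, \sum_(0 <= n < N) ((1 - q) * q ^+ n * x *
      (ln (1 - (1 - q) * (q ^+ n * x) * Tf (q ^+ n * x)) / (q ^+ n * x))) =
      (1 - q) * series (fun k => ln (d k)) N.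
    move=> N; rewrite /series /= mulr_sumr; apply: eq_bigr => n _.
    rewrite -[(1 - q) * q ^+ n * x]mulrA; apply: (term_eq _ _).1.
    by move=> ->; rewrite mulr0 mul0r subr0 ln1.
  rewrite (eq_cvg _ _ e).
  exact: cvgM (cvg_cst _) (lna_cvg hq0 hq1 d0 db).
have JI : forall k, jackson q (fun s => s^-1 * ln ((1 - (1 - q) * s * Rf s) /
                            (1 - (1 - q) * s * Tf s))) (q ^+ k * x) =
    (1 - q) * (La k - Ld k).
  move=> k; rewrite /jackson; apply: limE.
  have e : forall N, \sum_(0 <= m < N) ((1 - q) * q ^+ m * (q ^+ k * x) *
      ((q ^+ m * (q ^+ k * x))^-1 * ln ((1 - (1 - q) * (q ^+ m * (q ^+ k * x)) * Rf (q ^+ m * (q ^+ k * x))) /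
           (1 - (1 - q) * (q ^+ m * (q ^+ k * x)) * Tf (q ^+ m * (q ^+ k * x)))))) =
      (1 - q) * (series (fun m => ln (a (m + k)%N)) N - series (fun m => ln (d (m + k)%N)) N).
    move=> N; rewrite /series /= -sumrB mulr_sumr; apply: eq_bigr => m _.
    have em : q ^+ m * (q ^+ k * x) = q ^+ (m + k) * x by rewrite exprD mulrA.
    rewrite -[(1 - q) * q ^+ m * _]mulrA em (term_eq _ _).2.
      by rewrite ln_div // posrE; [exact: a0 | exact: d0].
    by move=> ->; rewrite !(mulr0, mul0r, subr0) invr1 mulr1 ln1.
  rewrite (eq_cvg _ _ e).
  exact: cvgM (cvg_cst _) (cvgB (lna_cvg hq0 hq1 (fun m => a0 (m + k)%N) (ab' k))
                                (lna_cvg hq0 hq1 (fun m => d0 (m + k)%N) (db' k))).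
have EA0 : 0 < EA by rewrite /EA expR_gt0.
have ED0 : 0 < ED by rewrite /ED expR_gt0.
have [CA hCA] : exists C, forall n, `|(PA n)^-1| <= C.
  apply: (@bnd_seq _ (fun n => (PA n)^-1) EA^-1).
  by apply: cvgV => //; rewrite gt_eqF.
have [CD hCD] := bnd_seq PDc.
pose w k := s k * PD k / PA k.+1.
have wb : forall k, `|w k| <= ((1 - q) * x * MS * CD * CA) * q ^+ k.
  move=> k; rewrite /w !normrM.
  apply: le_trans (ler_pM _ _ (ler_pM _ _ (sb k) (hCD k)) (hCA k.+1)) _.
  - by rewrite mulr_ge0.
  - by [].
  - by [].
  - by [].
  by rewrite le_eqVlt; apply/orP; left; apply/eqP; ring.
pose W := limn (series w).
have wc : series w n @[n --> \oo] --> W := geo_cvg hq0 hq1 wb.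
have hB : B = EA * W.
  rewrite /B hET.
  have -> : jackson q (fun t => Sf t / (1 - (1 - q) * t * Rf t) *
              expR ((1 - q)^-1 * jackson q (fun s =>
                 s^-1 * ln ((1 - (1 - q) * s * Rf s) /
                            (1 - (1 - q) * s * Tf s))) t)) x = - (EA / ED) * W.
    rewrite /jackson; apply: limE.
    have e : forall N, \sum_(0 <= k < N) ((1 - q) * q ^+ k * x *
      (Sf (q ^+ k * x) / (1 - (1 - q) * (q ^+ k * x) * Rf (q ^+ k * x)) *
              expR ((1 - q)^-1 * jackson q (fun s =>
                 s^-1 * ln ((1 - (1 - q) * s * Rf s) /
                            (1 - (1 - q) * s * Tf s))) (q ^+ k * x)))) =
      - (EA / ED) * series w N.
      move=> N; rewrite /series /= mulr_sumr; apply: eq_bigr => k _.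
      rewrite JI [(1 - q)^-1 * _]mulrA mulVf // mul1r expRD expRN.
      have hLa : expR (La k) = EA / PA k.
        by rewrite -(keyA k) mulrAC mulfV ?gt_eqF // mul1r.
      have hLd : expR (Ld k) = ED / PD k.
        by rewrite -(keyD k) mulrAC mulfV ?gt_eqF // mul1r.
      have hPS : PA k.+1 = PA k * a k by rewrite /PA big_ord_recr.
      rewrite hLa hLd /w hPS /s -/(a k).
      have := a0 k; have := PA0 k; have := PD0 k.
      move: (a k) (PA k) (PD k) => ak pak pdk h1 h2 h3.
      field.
      by rewrite !gt_eqF.
    rewrite (eq_cvg _ _ e).
    exact: cvgM (cvg_cst _) wc.
  by field; rewrite gt_eqF.
have LE : forall n, Lamn q Rf Sf Tf x n = mx2 (PA n) (PA n * series w n) 0 (PD n).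
  elim=> [|n IH].
    rewrite /PA /PD /series /= !big_ord0 big_geq // mulr0.
    apply/matrixP => i j; rewrite !mxE.
    by case: i => [[|[|i]] hi]; case: j => [[|[|j]] hj].
  rewrite /= IH.
  have -> : Lam q Rf Sf Tf (q ^+ n * x) = mx2 (a n) (s n) 0 (d n) by exact: Lam_eq.
  rewrite mx2_mul.
  have hPA : PA n.+1 = PA n * a n by rewrite /PA big_ord_recr.
  have hPD : PD n.+1 = PD n * d n by rewrite /PD big_ord_recr.
  have hS : series w n.+1 = series w n + w n by rewrite /series /= big_nat_recr.
  rewrite hPA hPD hS /w hPA.
  have := a0 n; have := PA0 n.
  move: (a n) (PA n) (PD n) (d n) (s n) (series w n) => an pan pdn dn sn sw h1 h2.
  congr mx2; [ring | field; rewrite !gt_eqF // | ring | ring].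
rewrite (eq_cvg _ _ LE) hER hET hB.
apply: cvg_mx2 => //.
- exact: cvgM PAc wc.
- exact: cvg_cst.
Qed.
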